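(* Let $(X,d,\ll,\le,\tau)$ be a regularly localizable Lorentzian pre-length space and let $\gamma:[a,b]\to X$ be a future-directed causal curve such that for some $a\le c<d\le b$ the restriction $\gamma|_{[c,d]}$ is rectifiable. Then there exists a future-directed timelike curve from $\gamma(a)$ to $\gamma(b)$. If $X$ is even SR-localizable, then this curve can be chosen to lie in any given neighborhood of $\gamma([a,b])$.
   Context: A causal space $(X,\ll,\le)$: $\le$ reflexive and transitive, $\ll$ transitive, $x\ll y\Rightarrow x\le y$; $x<y$ means $x\le y,x\ne y$; $I^\pm$ chronological future/past. A Lorentzian pre-length space $(X,d,\ll,\le,\tau)$ is a causal space with a metric $d$ and $\tau:X\times X\to[0,\infty]$ lower semicontinuous w.r.t. $d$, with $\tau(x,z)\ge\tau(x,y)+\tau(y,z)$ for $x\le y\le z$, $\tau(x,y)=0$ if $x\not\le y$, $\tau(x,y)>0\iff x\ll y$. Future-directed causal (timelike) curve: non-constant, $d$-locally Lipschitz $\gamma:I\to X$ with $\gamma(t_1)\le\gamma(t_2)$ (resp. $\ll$) for $t_1<t_2$; null if no two of its points are $\ll$-related; contains a null segment if null on a non-trivial subinterval. $L_\tau(\gamma)=\inf\sum_i\tau(\gamma(t_i),\gamma(t_{i+1}))$ over partitions of its domain; $\gamma$ is rectifiable if $L_\tau(\gamma|_{[t_1,t_2]})>0$ for all $t_1<t_2$ in its domain. $L^d$ is $d$-arclength. For an open set $\Omega$ consider: (a) some $C>0$ bounds $L^d$ of every causal curve in $\Omega$; (b) there is a continuous $\omega:\Omega\times\Omega\to[0,\infty)$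 making $\Omega$ with restricted $d,\ll,\le$ a Lorentzian pre-length space, with $I^\pm(y)\cap\Omega\ne\emptyset$ for all $y\in\Omega$; (c) for $p<q$ in $\Omega$ there is a future-directed causal curve $\gamma_{p,q}$ from $p$ to $q$ in $\Omega$ with $L_\tau(\gamma_{p,q})\ge L_\tau(\lambda)$ for all future-directed causal $\lambda$ from $p$ to $q$ in $\Omega$ and $L_\tau(\gamma_{p,q})=\omega(p,q)\le\tau(p,q)$; (d) whenever $p\ll q$ in $\Omega$, $\gamma_{p,q}$ is timelike and strictly longer than any future-directed causal curve in $\Omega$ from $p$ to $q$ containing a null segment. $X$ is regularly localizable if every point has an open neighborhood with (a)–(d), and SR-localizable if every point has a neighborhood basis of open sets with (a)–(d). *)

(* Defs.v *)
From Stdlib Require Import Reals.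
From Coquelicot Require Import Coquelicot.
Open Scope R_scope.

Section LPLS.
Variable X : Type.

Definition is_metric (d : X -> X -> R) : Prop :=
  (forall x y, 0 <= d x y) /\ (forall x y, d x y = 0 <-> x = y) /\
  (forall x y, d x y = d y x) /\ (forall x y z, d x z <= d x y + d y z).

Definition d_open (d : X -> X -> R) (U : X -> Prop) : Prop :=
  forall x, U x -> exists eps, 0 < eps /\ forall y, d x y < eps -> U y.

Definition d_nbhd_of_set (d : X -> X -> R) (A U : X -> Prop) : Prop :=
  exists V, d_open d V /\ (forall x, A x -> V x) /\ (forall x, V x -> U x).

Definition d_nbhd (d : X -> X -> R) (x : X) (U : X -> Prop) : Prop :=
  d_nbhd_of_set d (fun y => y = x) U.

Record causal_space (ll le : X -> X -> Prop) : Prop := {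
  cs_le_refl : forall x, le x x;
  cs_le_trans : forall x y z, le x y -> le y z -> le x z;
  cs_ll_trans : forall x y z, ll x y -> ll y z -> ll x z;
  cs_ll_le : forall x y, ll x y -> le x y }.

Record LPLS (d : X -> X -> R) (ll le : X -> X -> Prop) (tau : X -> X -> Rbar)
  : Prop := {
  lp_metric : is_metric d;
  lp_causal : causal_space ll le;
  lp_tau_nonneg : forall x y, Rbar_le (Finite 0) (tau x y);
  lp_tau_lsc : forall x y (r : R), Rbar_lt (Finite r) (tau x y) ->
      exists eps, 0 < eps /\ forall x' y', d x x' < eps -> d y y' < eps ->
        Rbar_lt (Finite r) (tau x' y');
  lp_rev_tri : forall x y z, le x y -> le y z ->
      Rbar_le (Rbar_plus (tau x y) (tau y z)) (tau x z);
  lp_tau_zero : forall x y, ~ le x y -> tau x y = Finite 0;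
  lp_tau_pos : forall x y, Rbar_lt (Finite 0) (tau x y) <-> ll x y }.

Definition in_cint (a b t : R) : Prop := a <= t <= b.

Definition loc_lipschitz (d : X -> X -> R) (a b : R) (g : R -> X) : Prop :=
  forall t, in_cint a b t -> exists delta L, 0 < delta /\
    forall s s', in_cint a b s -> in_cint a b s' ->
      Rabs (s - t) < delta -> Rabs (s' - t) < delta ->
      d (g s) (g s') <= L * Rabs (s - s').

Definition non_constant (a b : R) (g : R -> X) : Prop :=
  exists s s', in_cint a b s /\ in_cint a b s' /\ g s <> g s'.

Definition fd_causal (d : X -> X -> R) (le : X -> X -> Prop)
    (a b : R) (g : R -> X) : Prop :=
  a < b /\ non_constant a b g /\ loc_lipschitz d a b g /\
  forall t1 t2, in_cint a b t1 -> in_cint a b t2 -> t1 < t2 -> le (g t1) (g t2).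

Definition fd_timelike (d : X -> X -> R) (ll : X -> X -> Prop)
    (a b : R) (g : R -> X) : Prop :=
  a < b /\ non_constant a b g /\ loc_lipschitz d a b g /\
  forall t1 t2, in_cint a b t1 -> in_cint a b t2 -> t1 < t2 -> ll (g t1) (g t2).

Definition null_on (ll : X -> X -> Prop) (a b : R) (g : R -> X) : Prop :=
  forall s s', in_cint a b s -> in_cint a b s' -> ~ ll (g s) (g s').

Definition has_null_segment (ll : X -> X -> Prop) (a b : R) (g : R -> X)
  : Prop :=
  exists c e, a <= c /\ c < e /\ e <= b /\ null_on ll c e g.

Definition curve_in (U : X -> Prop) (a b : R) (g : R -> X) : Prop :=
  forall t, in_cint a b t -> U (g t).

Definition is_partition (a b : R) (n : nat) (t : nat -> R) : Prop :=
  t O = a /\ t n = b /\ forall i, (i < n)%nat -> t i < t (S i).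

Fixpoint Rbar_sum (f : nat -> Rbar) (n : nat) : Rbar :=
  match n with O => Finite 0 | S k => Rbar_plus (Rbar_sum f k) (f k) end.

Definition L_tau (tau : X -> X -> Rbar) (a b : R) (g : R -> X) : Rbar :=
  Rbar_glb (fun r => exists n t, is_partition a b n t /\
     r = Rbar_sum (fun i => tau (g (t i)) (g (t (S i)))) n).

Definition L_d (d : X -> X -> R) (a b : R) (g : R -> X) : Rbar :=
  Rbar_lub (fun r => exists n t, is_partition a b n t /\
     r = Rbar_sum (fun i => Finite (d (g (t i)) (g (t (S i))))) n).

Definition rectifiable_on (tau : X -> X -> Rbar) (c e : R) (g : R -> X)
  : Prop :=
  forall t1 t2, c <= t1 -> t1 < t2 -> t2 <= e ->
    Rbar_lt (Finite 0) (L_tau tau t1 t2 g).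

Definition good_nbhd (d : X -> X -> R) (ll le : X -> X -> Prop)
    (tau : X -> X -> Rbar) (O : X -> Prop) : Prop :=
  d_open d O /\
  (exists C, 0 < C /\ forall a b g, fd_causal d le a b g -> curve_in O a b g ->
      Rbar_le (L_d d a b g) (Finite C)) /\
  exists omega : X -> X -> R,
    (forall x y, O x -> O y -> forall eps, 0 < eps -> exists delta, 0 < delta /\
       forall x' y', O x' -> O y' -> d x x' < delta -> d y y' < delta ->
         Rabs (omega x' y' - omega x y) < eps) /\
    (forall x y, O x -> O y -> 0 <= omega x y) /\
    (forall x y z, O x -> O y -> O z -> le x y -> le y z ->
       omega x y + omega y z <= omega x z) /\
    (forall x y, O x -> O y -> ~ le x y -> omega x y = 0) /\
    (forall x y, O x -> O y -> (0 < omega x y <-> ll x y)) /\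
    (forall y, O y -> (exists z, O z /\ ll y z) /\ (exists z, O z /\ ll z y)) /\
    forall p q, O p -> O q -> le p q -> p <> q ->
      exists a b g, fd_causal d le a b g /\ curve_in O a b g /\
        g a = p /\ g b = q /\
        (forall a' b' l, fd_causal d le a' b' l -> curve_in O a' b' l ->
           l a' = p -> l b' = q -> Rbar_le (L_tau tau a' b' l) (L_tau tau a b g)) /\
        L_tau tau a b g = Finite (omega p q) /\
        Rbar_le (Finite (omega p q)) (tau p q) /\
        (ll p q ->
           fd_timelike d ll a b g /\
           forall a' b' l, fd_causal d le a' b' l -> curve_in O a' b' l ->
             l a' = p -> l b' = q -> has_null_segment ll a' b' l ->
             Rbar_lt (L_tau tau a' b' l) (L_tau tau a b g)).

Definition regularly_localizable d ll le tau : Prop :=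
  forall x, exists O, O x /\ good_nbhd d ll le tau O.

Definition SR_localizable d ll le tau : Prop :=
  forall x U, d_nbhd d x U ->
    exists O, O x /\ (forall y, O y -> U y) /\ good_nbhd d ll le tau O.

End LPLS.

(* Main.v *)
Require Import Defs.
From Stdlib Require Import Reals Lra Lia Classical_Prop.
From Coquelicot Require Import Coquelicot.
Open Scope R_scope.


Lemma real_ind (X : Type) (Rel ll le : X -> X -> Prop) (g : R -> X) (m b : R) :
  m < b ->
  (forall p q r, Rel p q -> Rel q r -> Rel p r) ->
  (forall p q r, ll p q -> le q r -> ll p r) ->
  (forall t1 t2, m <= t1 -> t1 < t2 -> t2 <= b -> le (g t1) (g t2)) ->
  (forall t, m <= t <= b -> exists delta (O : X -> Prop), 0 < delta /\
      (forall s, m <= s <= b -> Rabs (s - t) < delta -> O (g s)) /\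
      (forall p q, O p -> O q -> ll p q -> Rel p q) /\
      (forall p q, Rel p q -> O q -> exists w, O w /\ Rel p w /\ ll w q)) ->
  (exists e, m < e /\ forall x, m < x -> x <= e -> ll (g m) (g x)) ->
  Rel (g m) (g b).
Proof.
  intros Hmb Htr Hpush Hmono Hcov [e [He Htl]].
  set (S := fun x => m <= x <= b /\ forall y, m < y -> y <= x -> Rel (g m) (g y)).
  assert (Hb : bound S) by (exists b; intros x [Hx _]; lra).
  assert (Hne : exists x, S x) by (exists m; split; [lra| intros; lra]).
  destruct (completeness S Hb Hne) as [s [Hub Hlub]].
  assert (Hms : m <= s) by (apply Hub; split; [lra| intros; lra]).
  assert (Hsb : s <= b) by (apply Hlub; intros x [Hx _]; lra).
  assert (Hdown : forall y, m < y -> y < s -> Rel (g m) (g y)).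
  { intros y Hy Hys.
    destruct (Classical_Prop.classic (exists x, S x /\ y <= x)) as [[x [[_ Hx] Hyx]]|Hn].
    - apply Hx; lra.
    - exfalso. assert (s <= y); [|lra]. apply Hlub. intros x Sx.
      destruct (Rle_lt_dec x y); [lra|]. exfalso; apply Hn; exists x; split; [auto|lra]. }
  destruct (Hcov s (conj Hms Hsb)) as [delta [O [Hd [HO [Hloc Happ]]]]].
  assert (Hkey : exists y', y' < s /\ s - delta < y' /\
             forall z, y' < z -> m < z -> z <= b -> z < s + delta -> Rel (g m) (g z)).
  { destruct (Rle_lt_dec s m) as [Hsm|Hsm].
    - exists (s - delta/2). split; [lra|split;[lra|]].
      intros z H1 H2 H3 H4.
      assert (s = m) by lra. subst s.
      destruct (Rle_lt_dec z (Rmin e b)) as [Hze|Hze].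
      + apply Hloc. apply HO; [lra|]. apply Rabs_def1; lra.
        apply HO; [lra|]. apply Rabs_def1; lra.
        apply Htl; [lra|]. pose proof (Rmin_l e b); lra.
      + exfalso.
        set (x := Rmin (m + delta/2) (Rmin e b)).
        assert (Hx1 : x <= m + delta/2) by apply Rmin_l.
        assert (Hx2 : x <= Rmin e b) by apply Rmin_r.
        assert (Hx3 : m < x).
        { unfold x. apply Rmin_glb_lt; [lra|]. apply Rmin_glb_lt; lra. }
        assert (Sx : S x).
        { split. pose proof (Rmin_r e b). lra.
          intros y Hy Hyx. apply Hloc. apply HO; [lra|]. apply Rabs_def1; lra.
          apply HO. pose proof (Rmin_r e b). lra. apply Rabs_def1; lra.
          apply Htl; [lra|]. pose proof (Rmin_l e b). lra. }
        pose proof (Hub x Sx). lra.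
    - set (y' := (Rmax m (s - delta) + s) / 2).
      assert (Hy1 : m <= Rmax m (s - delta)) by apply Rmax_l.
      assert (Hy2 : s - delta <= Rmax m (s - delta)) by apply Rmax_r.
      assert (Hy3 : Rmax m (s - delta) < s) by (apply Rmax_lub_lt; lra).
      exists y'. split; [unfold y'; lra|]. split; [unfold y'; lra|].
      intros z H1 H2 H3 H4.
      assert (Ry : Rel (g m) (g y')) by (apply Hdown; unfold y'; lra).
      assert (Oy : O (g y')) by (apply HO; [unfold y'; split; lra|]; apply Rabs_def1; unfold y'; lra).
      destruct (Happ _ _ Ry Oy) as [w [Ow [Rw Lw]]].
      apply (Htr _ w); auto. apply Hloc; auto. apply HO. split; lra. unfold y' in H1; apply Rabs_def1; lra.
      apply (Hpush _ (g y')); auto. apply Hmono; unfold y' in *; lra. }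
  destruct Hkey as [y' [Hy's [Hy'd Hz]]].
  destruct (Rle_lt_dec b (s + delta/2)) as [Hbs|Hbs].
  - apply Hz; lra.
  - exfalso.
    assert (Sx : S (s + delta/2)).
    { split; [lra|]. intros y Hy Hyx.
      destruct (Rle_lt_dec y y') as [Hyy|Hyy].
      + apply Hdown; lra.
      + apply Hz; lra. }
    pose proof (Hub _ Sx). lra.
Qed.


Section Curves.
Variable X : Type.
Variable d : X -> X -> R.
Variable ll : X -> X -> Prop.
Hypothesis Hmet : is_metric X d.
Hypothesis Hchr : forall x, ~ ll x x.
Hypothesis Hlltr : forall x y z, ll x y -> ll y z -> ll x z.

Lemma d_sym x y : d x y = d y x.
Proof. destruct Hmet as [_ [_ [H _]]]; auto. Qed.
Lemma d_tri x y z : d x z <= d x y + d y z.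
Proof. destruct Hmet as [_ [_ [_ H]]]; auto. Qed.
Lemma d_pos x y : 0 <= d x y.
Proof. destruct Hmet as [H _]; auto. Qed.

Lemma mk_tl a b s : a < b -> loc_lipschitz X d a b s ->
  (forall t1 t2, in_cint a b t1 -> in_cint a b t2 -> t1 < t2 -> ll (s t1) (s t2)) ->
  fd_timelike X d ll a b s.
Proof.
  intros Hab Hl Ht. split; [auto|split; [|split; auto]].
  exists a, b. split; [unfold in_cint; lra|split; [unfold in_cint; lra|]].
  intro E. apply (Hchr (s a)). rewrite E at 2. apply Ht; unfold in_cint; lra.
Qed.

Lemma tl_restrict a b s a2 b2 : fd_timelike X d ll a b s ->
  a <= a2 -> a2 < b2 -> b2 <= b -> fd_timelike X d ll a2 b2 s.
Proof.
  intros [_ [_ [Hl Ht]]] H1 H2 H3. apply mk_tl; auto.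
  - intros t Ht'. unfold in_cint in *. destruct (Hl t) as [de [L [Hde HL]]]; [unfold in_cint; lra|].
    exists de, L. split; auto. intros u u' Hu Hu'. apply HL; unfold in_cint in *; lra.
  - intros t1 t2 Ht1 Ht2 Hlt. apply Ht; unfold in_cint in *; lra.
Qed.

Definition concat (b1 a2 : R) (s1 s2 : R -> X) : R -> X :=
  fun t => if Rle_dec t b1 then s1 t else s2 (t - b1 + a2).

Lemma lip_le (L1 L x : R) : L1 <= L -> 0 <= x -> L1 * x <= L * x.
Proof. intros; nra. Qed.

Lemma concat_tl a1 b1 s1 a2 b2 s2 :
  fd_timelike X d ll a1 b1 s1 -> fd_timelike X d ll a2 b2 s2 -> s1 b1 = s2 a2 ->
  fd_timelike X d ll a1 (b1 + (b2 - a2)) (concat b1 a2 s1 s2).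
Proof.
  intros [Hab1 [_ [Hl1 Ht1]]] [Hab2 [_ [Hl2 Ht2]]] Hj.
  apply mk_tl; [lra| |].
  - intros t Ht. unfold in_cint in Ht. unfold concat.
    destruct (Rtotal_order t b1) as [Hlt|[Heq|Hgt]].
    + destruct (Hl1 t) as [de [L [Hde HL]]]; [unfold in_cint; lra|].
      exists (Rmin de (b1 - t)), L. split; [apply Rmin_glb_lt; lra|].
      intros u u' Hu Hu' Hut Hut'.
      pose proof (Rmin_l de (b1 - t)). pose proof (Rmin_r de (b1 - t)).
      apply Rabs_def2 in Hut. apply Rabs_def2 in Hut'.
      red in Hu, Hu'.
      destruct (Rle_dec u b1); [|lra]. destruct (Rle_dec u' b1); [|lra].
      apply HL; try (unfold in_cint; lra); apply Rabs_def1; lra.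
    + subst t.
      destruct (Hl1 b1) as [de1 [L1 [Hde1 HL1]]]; [unfold in_cint; lra|].
      destruct (Hl2 a2) as [de2 [L2 [Hde2 HL2]]]; [unfold in_cint; lra|].
      exists (Rmin de1 de2), (Rmax L1 L2). split; [apply Rmin_glb_lt; lra|].
      pose proof (Rmin_l de1 de2). pose proof (Rmin_r de1 de2).
      pose proof (Rmax_l L1 L2). pose proof (Rmax_r L1 L2).
      assert (K1 : forall u, a1 <= u <= b1 -> b1 - u < de1 -> d (s1 u) (s1 b1) <= Rmax L1 L2 * (b1 - u)).
      { intros u Hu Hd. eapply Rle_trans. apply HL1; try (unfold in_cint; lra); apply Rabs_def1; lra.
        rewrite Rabs_left1 by lra. rewrite Ropp_minus_distr. apply lip_le; lra. }
      assert (K2 : forall u, a2 <= u <= b2 -> u - a2 < de2 -> d (s2 a2) (s2 u) <= Rmax L1 L2 * (u - a2)).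
      { intros u Hu Hd. eapply Rle_trans. apply HL2; try (unfold in_cint; lra); apply Rabs_def1; lra.
        rewrite Rabs_left1 by lra. rewrite Ropp_minus_distr. apply lip_le; lra. }
      intros u u' Hu Hu' Hut Hut'. red in Hu, Hu'.
      apply Rabs_def2 in Hut. apply Rabs_def2 in Hut'.
      destruct (Rle_dec u b1) as [Hu1|Hu1]; destruct (Rle_dec u' b1) as [Hu1'|Hu1'].
      * eapply Rle_trans. apply HL1; try (unfold in_cint; lra); apply Rabs_def1; lra.
        apply lip_le; [lra|apply Rabs_pos].
      * eapply Rle_trans. apply (d_tri _ (s1 b1)).
        rewrite Hj at 2.
        assert (d (s1 u) (s1 b1) + d (s2 a2) (s2 (u' - b1 + a2)) <= Rmax L1 L2 * (b1 - u) + Rmax L1 L2 * (u' - b1 + a2 - a2)).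
        { apply Rplus_le_compat. apply K1; lra. apply K2; lra. }
        rewrite (Rabs_left1 (u - u')) by lra. lra.
      * eapply Rle_trans. apply (d_tri _ (s1 b1)).
        rewrite Hj at 1. rewrite (d_sym (s2 (u - b1 + a2))).
        rewrite (d_sym (s1 b1)).
        assert (d (s1 u') (s1 b1) + d (s2 a2) (s2 (u - b1 + a2)) <= Rmax L1 L2 * (b1 - u') + Rmax L1 L2 * (u - b1 + a2 - a2)).
        { apply Rplus_le_compat. apply K1; lra. apply K2; lra. }
        rewrite (Rabs_pos_eq (u - u')) by lra. lra.
      * eapply Rle_trans. apply HL2; try (unfold in_cint; lra); apply Rabs_def1; lra.
        replace (u - b1 + a2 - (u' - b1 + a2)) with (u - u') by ring.
        apply lip_le; [lra|apply Rabs_pos].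
    + destruct (Hl2 (t - b1 + a2)) as [de [L [Hde HL]]]; [unfold in_cint; lra|].
      exists (Rmin de (t - b1)), L. split; [apply Rmin_glb_lt; lra|].
      intros u u' Hu Hu' Hut Hut'.
      pose proof (Rmin_l de (t - b1)). pose proof (Rmin_r de (t - b1)).
      apply Rabs_def2 in Hut. apply Rabs_def2 in Hut'.
      red in Hu, Hu'.
      destruct (Rle_dec u b1); [lra|]. destruct (Rle_dec u' b1); [lra|].
      replace (u - u') with ((u - b1 + a2) - (u' - b1 + a2)) by ring.
      apply HL; try (unfold in_cint; lra); apply Rabs_def1; lra.
  - intros t1 t2 H1 H2 H. unfold concat. red in H1, H2.
    destruct (Rle_dec t1 b1); destruct (Rle_dec t2 b1).
    + apply Ht1; unfold in_cint; lra.
    + destruct (Rle_lt_or_eq_dec _ _ r) as [Hl|He].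
      * apply (Hlltr _ (s1 b1)). apply Ht1; unfold in_cint; lra. rewrite Hj. apply Ht2; unfold in_cint; lra.
      * subst t1. rewrite Hj. apply Ht2; unfold in_cint; lra.
    + lra.
    + apply Ht2; unfold in_cint; lra.
Qed.

End Curves.


Lemma Rbar_pos_plus (x y : Rbar) : Rbar_lt (Finite 0) x -> Rbar_le (Finite 0) y ->
  Rbar_lt (Finite 0) (Rbar_plus x y).
Proof. destruct x, y; simpl; intros; try lra; auto. Qed.

Lemma Rbar_glb_single (v : Rbar) : Rbar_glb (fun x => x = v) = v.
Proof.
  apply Rbar_is_glb_unique. split.
  - intros x ->. apply Rbar_le_refl.
  - intros b Hb. apply Hb. reflexivity.
Qed.

Section Main.
Variable X : Type.
Variable d : X -> X -> R.
Variables ll le : X -> X -> Prop.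
Variable tau : X -> X -> Rbar.
Hypothesis HL : LPLS X d ll le tau.

Lemma push1 p q r : ll p q -> le q r -> ll p r.
Proof.
  intros H1 H2. apply (lp_tau_pos _ _ _ _ _ HL). apply (lp_tau_pos _ _ _ _ _ HL) in H1.
  eapply Rbar_lt_le_trans; [|apply (lp_rev_tri _ _ _ _ _ HL p q r); auto].
  apply Rbar_pos_plus; auto. apply (lp_tau_nonneg _ _ _ _ _ HL).
  apply (cs_ll_le _ _ _ (lp_causal _ _ _ _ _ HL)). apply (lp_tau_pos _ _ _ _ _ HL); auto.
Qed.

Lemma push2 p q r : le p q -> ll q r -> ll p r.
Proof.
  intros H1 H2. apply (lp_tau_pos _ _ _ _ _ HL). apply (lp_tau_pos _ _ _ _ _ HL) in H2.
  eapply Rbar_lt_le_trans; [|apply (lp_rev_tri _ _ _ _ _ HL p q r); auto].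
  rewrite Rbar_plus_comm.
  apply Rbar_pos_plus; auto. apply (lp_tau_nonneg _ _ _ _ _ HL).
  apply (cs_ll_le _ _ _ (lp_causal _ _ _ _ _ HL)). apply (lp_tau_pos _ _ _ _ _ HL); auto.
Qed.

Lemma rect_ll c e g t1 t2 : rectifiable_on X tau c e g -> c <= t1 -> t1 < t2 -> t2 <= e ->
  ll (g t1) (g t2).
Proof.
  intros Hr H1 H2 H3. apply (lp_tau_pos _ _ _ _ _ HL).
  eapply Rbar_lt_le_trans. apply (Hr t1 t2); auto.
  unfold L_tau. rewrite <- (Rbar_glb_single (tau (g t1) (g t2))).
  apply Rbar_glb_subset. intros x ->.
  exists 1%nat, (fun i => match i with O => t1 | _ => t2 end).
  split.
  - split; [reflexivity|split; [reflexivity|]].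
    intros i Hi. destruct i; [lra|lia].
  - simpl. rewrite Rbar_plus_0_l. reflexivity.
Qed.

Lemma chrono : regularly_localizable X d ll le tau -> forall x, ~ ll x x.
Proof.
  intros HR x Hx. destruct (HR x) as [O [Ox G]].
  destruct G as [_ [_ [omega [_ [_ [Htri [_ [Hpos _]]]]]]]].
  pose proof (cs_le_refl _ _ _ (lp_causal _ _ _ _ _ HL) x) as Hr.
  pose proof (Htri x x x Ox Ox Ox Hr Hr). pose proof (proj2 (Hpos x x Ox Ox) Hx). lra.
Qed.

End Main.


Lemma cont_lip (X : Type) (d : X -> X -> R) a b g t eps :
  loc_lipschitz X d a b g -> in_cint a b t -> 0 < eps ->
  exists de, 0 < de /\ forall s, in_cint a b s -> Rabs (s - t) < de -> d (g t) (g s) < eps.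
Proof.
  intros Hl Ht He. destruct (Hl t Ht) as [de1 [L [Hd1 HL]]].
  set (k := Rabs L + 1). assert (Hk : 0 < k) by (unfold k; pose proof (Rabs_pos L); lra).
  exists (Rmin de1 (eps / k)). split.
  { apply Rmin_glb_lt; auto. apply Rdiv_lt_0_compat; auto. }
  intros s Hs Hst. pose proof (Rmin_l de1 (eps/k)). pose proof (Rmin_r de1 (eps/k)).
  eapply Rle_lt_trans. apply HL; auto. rewrite Rminus_diag, Rabs_R0; lra. lra.
  rewrite Rabs_minus_sym.
  set (x := Rabs (s - t)) in *. assert (0 <= x) by apply Rabs_pos.
  assert (x * k < eps / k * k) by (apply Rmult_lt_compat_r; lra).
  replace (eps / k * k) with eps in H2 by (field; lra).
  pose proof (Rle_abs L). unfold k in H2. nra.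
Qed.

Section Reach.
Variable X : Type.
Variable d : X -> X -> R.
Variables ll le : X -> X -> Prop.
Variable tau : X -> X -> Rbar.
Hypothesis HL : LPLS X d ll le tau.
Hypothesis Hchr : forall x, ~ ll x x.
Variable U : X -> Prop.

Definition Rch p q := exists a b s, fd_timelike X d ll a b s /\ s a = p /\ s b = q /\
  curve_in X U a b s.

Let Hmet := lp_metric _ _ _ _ _ HL.
Let Hlltr := cs_ll_trans _ _ _ (lp_causal _ _ _ _ _ HL).

Lemma Rch_trans p q r : Rch p q -> Rch q r -> Rch p r.
Proof.
  intros [a1 [b1 [s1 [T1 [E1 [F1 C1]]]]]] [a2 [b2 [s2 [T2 [E2 [F2 C2]]]]]].
  pose proof (proj1 T1) as Hab1. pose proof (proj1 T2) as Hab2.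
  exists a1, (b1 + (b2 - a2)), (concat X b1 a2 s1 s2).
  split; [apply concat_tl; auto; congruence|].
  unfold concat. split; [|split].
  - destruct (Rle_dec a1 b1); [auto|lra].
  - destruct (Rle_dec (b1 + (b2 - a2)) b1); [lra|].
    replace (b1 + (b2 - a2) - b1 + a2) with b2 by ring. auto.
  - intros t Ht. unfold in_cint in Ht. destruct (Rle_dec t b1).
    + apply C1; unfold in_cint; lra.
    + apply C2; unfold in_cint; lra.
Qed.

Lemma approach_end p q (O : X -> Prop) : Rch p q -> d_open X d O -> O q ->
  exists w, O w /\ Rch p w /\ ll w q.
Proof.
  intros [a [b [s [T [E [F C]]]]]] Ho Oq.
  destruct (Ho q Oq) as [eps [He Hb]].
  destruct T as [Hab [Hnc [Hl Ht]]].
  destruct (cont_lip X d a b s b eps Hl) as [de [Hde Hc]]; [unfold in_cint; lra|auto|].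
  set (u := Rmax ((a + b)/2) (b - de/2)).
  assert (u1 : (a+b)/2 <= u) by apply Rmax_l.
  assert (u2 : b - de/2 <= u) by apply Rmax_r.
  assert (u3 : u < b) by (apply Rmax_lub_lt; lra).
  exists (s u). split; [|split].
  - apply Hb. rewrite <- F. apply Hc. unfold in_cint; lra. apply Rabs_def1; lra.
  - exists a, u, s. split; [apply (tl_restrict X d ll Hchr a b); auto; try lra; split; auto|].
    split; [auto|split; [auto|]]. intros t Ht0. apply C. unfold in_cint in *; lra.
  - rewrite <- F. apply Ht; unfold in_cint; lra.
Qed.

Lemma approach_start p q (O : X -> Prop) : Rch p q -> d_open X d O -> O p ->
  exists w, O w /\ Rch w q /\ ll p w.
Proof.
  intros [a [b [s [T [E [F C]]]]]] Ho Op.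
  destruct (Ho p Op) as [eps [He Hb]].
  destruct T as [Hab [Hnc [Hl Ht]]].
  destruct (cont_lip X d a b s a eps Hl) as [de [Hde Hc]]; [unfold in_cint; lra|auto|].
  set (u := Rmin ((a + b)/2) (a + de/2)).
  assert (u1 : u <= (a+b)/2) by apply Rmin_l.
  assert (u2 : u <= a + de/2) by apply Rmin_r.
  assert (u3 : a < u) by (apply Rmin_glb_lt; lra).
  exists (s u). split; [|split].
  - apply Hb. rewrite <- E. apply Hc. unfold in_cint; lra. apply Rabs_def1; lra.
  - exists u, b, s. split; [apply (tl_restrict X d ll Hchr a b); auto; try lra; split; auto|].
    split; [auto|split; [auto|]]. intros t Ht0. apply C. unfold in_cint in *; lra.
  - rewrite <- E. apply Ht; unfold in_cint; lra.
Qed.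

Lemma local_reach (O : X -> Prop) p q : good_nbhd X d ll le tau O -> (forall y, O y -> U y) ->
  O p -> O q -> ll p q -> Rch p q.
Proof.
  intros G HU Op Oq Hpq.
  destruct G as [_ [_ [omega [_ [_ [_ [_ [_ [_ Hc]]]]]]]]].
  assert (Hne : p <> q) by (intro E; subst; apply (Hchr q); auto).
  destruct (Hc p q Op Oq (cs_ll_le _ _ _ (lp_causal _ _ _ _ _ HL) _ _ Hpq) Hne)
    as [a [b [g [_ [Cg [Ea [Eb [_ [_ [_ Ht]]]]]]]]]].
  exists a, b, g. split; [apply Ht; auto|split; [auto|split; [auto|]]].
  intros t H. apply HU. apply Cg; auto.
Qed.

End Reach.


Lemma main_U (X : Type) (d : X -> X -> R) (ll le : X -> X -> Prop) (tau : X -> X -> Rbar)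
  (HL : LPLS X d ll le tau) (Hchr : forall x, ~ ll x x) (U : X -> Prop) a b g :
  (forall t, in_cint a b t -> exists O, O (g t) /\ (forall y, O y -> U y) /\
      good_nbhd X d ll le tau O) ->
  fd_causal X d le a b g ->
  (exists c e, a <= c /\ c < e /\ e <= b /\ rectifiable_on X tau c e g) ->
  Rch X d ll U (g a) (g b).
Proof.
  intros Hloc [Hab [_ [Hl Hmono]]] [c [e [Hac [Hce [Heb Hr]]]]].
  assert (Hcov : forall t, a <= t <= b -> exists delta (O : X -> Prop), 0 < delta /\
      (forall s, a <= s <= b -> Rabs (s - t) < delta -> O (g s)) /\
      (forall p q, O p -> O q -> ll p q -> Rch X d ll U p q) /\
      (forall p q, Rch X d ll U p q -> O q -> exists w, O w /\ Rch X d ll U p w /\ ll w q) /\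
      (forall p q, Rch X d ll U p q -> O p -> exists w, O w /\ Rch X d ll U w q /\ ll p w)).
  { intros t Ht. destruct (Hloc t Ht) as [O [Ot [HU G]]].
    pose proof G as G'. destruct G' as [Hop _].
    destruct (Hop _ Ot) as [eps [He Hb]].
    destruct (cont_lip X d a b g t eps Hl Ht He) as [de [Hde Hc]].
    exists de, O. split; [auto|split; [|split; [|split]]].
    - intros s Hs Hst. apply Hb. apply Hc; auto.
    - intros p q Hp Hq Hpq. eapply local_reach; eauto.
    - intros p q Hpq Hq. eapply approach_end; eauto.
    - intros p q Hpq Hp. eapply approach_start; eauto. }
  set (m := (c + e) / 2).
  assert (Hfw : Rch X d ll U (g m) (g b)).
  { apply (real_ind X (Rch X d ll U) ll le g m b).
    - unfold m; lra.
    - intros; eapply Rch_trans; eauto.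
    - intros; eapply push1; eauto.
    - intros t1 t2 H1 H2 H3. apply Hmono; unfold in_cint, m in *; lra.
    - intros t Ht. destruct (Hcov t) as [de [O [Hde [HO [H1 [H2 _]]]]]]; [unfold m in *; lra|].
      exists de, O. split; [auto|split; [|split; auto]].
      intros s Hs Hst. apply HO; auto. unfold m in *; lra.
    - exists e. split; [unfold m; lra|]. intros x H1 H2. apply (rect_ll X d ll le tau HL c e); auto.
      unfold m; lra. }
  assert (Hbw : Rch X d ll U (g a) (g m)).
  { pose proof (real_ind X (fun p q => Rch X d ll U q p) (fun p q => ll q p) (fun p q => le q p)
       (fun t => g (- t)) (- m) (- a)) as K.
    cbv beta in K. rewrite !Ropp_involutive in K. apply K; clear K.
    - unfold m; lra.
    - intros p q r H1 H2; eapply Rch_trans; eauto.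
    - intros p q r H1 H2; eapply push2; eauto.
    - intros t1 t2 H1 H2 H3. apply Hmono; unfold in_cint, m in *; lra.
    - intros t Ht. destruct (Hcov (- t)) as [de [O [Hde [HO [H1 [_ H2]]]]]]; [unfold m in *; lra|].
      exists de, O. split; [auto|split; [|split]].
      + intros s Hs Hst. apply HO. unfold m in *; lra.
        replace (- s - - t) with (- (s - t)) by ring. rewrite Rabs_Ropp. auto.
      + intros p q Hp Hq Hpq. apply H1; auto.
      + intros p q Hpq Hq. destruct (H2 q p Hpq Hq) as [w [Ow [Rw Lw]]]. exists w; auto.
    - exists (- c). split; [unfold m; lra|]. intros x H1 H2.
      apply (rect_ll X d ll le tau HL c e); auto; unfold m in *; lra. }
  eapply Rch_trans; eauto.
Qed.


Theorem corollary3p21 (X : Type) (d : X -> X -> R) (ll le : X -> X -> Prop)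
    (tau : X -> X -> Rbar) :
  LPLS X d ll le tau ->
  regularly_localizable X d ll le tau ->
  forall (a b : R) (g : R -> X),
    fd_causal X d le a b g ->
    (exists c e, a <= c /\ c < e /\ e <= b /\ rectifiable_on X tau c e g) ->
    (exists a' b' s, fd_timelike X d ll a' b' s /\ s a' = g a /\ s b' = g b) /\
    (SR_localizable X d ll le tau ->
       forall U : X -> Prop,
         d_nbhd_of_set X d (fun x => exists t, in_cint a b t /\ x = g t) U ->
         exists a' b' s, fd_timelike X d ll a' b' s /\ s a' = g a /\
           s b' = g b /\ curve_in X U a' b' s).
Proof.
  intros HL HR a b g Hg Hrect.
  pose proof (chrono X d ll le tau HL HR) as Hchr.
  split.
  - destruct (main_U X d ll le tau HL Hchr (fun _ => True) a b g) as [a' [b' [s [T [E1 [E2 _]]]]]]; auto.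
    + intros t Ht. destruct (HR (g t)) as [O [Ot G]]. exists O; auto.
    + exists a', b', s; auto.
  - intros HSR U [V [Vo [HV VU]]].
    apply (main_U X d ll le tau HL Hchr U a b g); auto.
    intros t Ht. destruct (HSR (g t) U) as [O [Ot [OU G]]].
    + exists V. split; [auto|split; [|auto]]. intros x ->. apply HV. exists t; auto.
    + exists O; auto.
Qed.
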